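(* A GNS $S\subseteq\mathbb{N}^d$ is quasi-irreducible if and only if for every $P\in PF(S)$, either $P\in FA(S)$ or $2P\in FA(S)$.
   Context: $\mathbb{N}=\{0,1,2,\dots\}$. A GNS is a submonoid $S\subseteq\mathbb{N}^d$ with finite complement $\mathcal{H}(S)=\mathbb{N}^d\setminus S$ (gaps). A relaxed monomial order is a total order $\prec$ on $\mathbb{N}^d$ with (i) $v\prec w\Rightarrow v\prec w+u$ for all $u\in\mathbb{N}^d$, (ii) $0\prec v$ for all $v\neq0$. A gap is Frobenius allowable if it equals $\max_\prec\mathcal{H}(S)$ for some relaxed monomial order; $FA(S)$ is the set of these. A gap $P$ is pseudo-Frobenius if $P+s\in S$ for all nonzero $s\in S$; $PF(S)$ is the set of these. $S$ is quasi-irreducible if for every $x\in\mathcal{H}(S)$, either $2x\in FA(S)$ or there is $F\in FA(S)$ with $F-x\in S$. *)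

(* Defs.v *)
From mathcomp Require Import all_boot.
Set Implicit Arguments. Unset Strict Implicit. Unset Printing Implicit Defensive.

Definition vec (d : nat) := {ffun 'I_d -> nat}.

Definition vzero (d : nat) : vec d := [ffun _ => 0].
Definition vadd (d : nat) (u v : vec d) : vec d := [ffun i => u i + v i].

Definition is_GNS (d : nat) (S : vec d -> Prop) : Prop :=
  [/\ S (vzero d),
      (forall u v, S u -> S v -> S (vadd u v)) &
      exists gaps : seq (vec d), forall x, ~ S x -> x \in gaps].

Definition is_gap (d : nat) (S : vec d -> Prop) (x : vec d) : Prop := ~ S x.

Definition relaxed_monomial_order (d : nat) (lt : vec d -> vec d -> Prop) : Prop :=
  [/\ (forall v, ~ lt v v),
      (forall u v w, lt u v -> lt v w -> lt u w),
      (forall v w, v <> w -> lt v w \/ lt w v),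
      (forall v w u, lt v w -> lt v (vadd w u)) &
      (forall v, v <> vzero d -> lt (vzero d) v)].

Definition is_max_gap (d : nat) (lt : vec d -> vec d -> Prop)
    (S : vec d -> Prop) (F : vec d) : Prop :=
  is_gap S F /\ forall x, is_gap S x -> x <> F -> lt x F.

Definition frobenius_allowable (d : nat) (S : vec d -> Prop) (F : vec d) : Prop :=
  exists lt : vec d -> vec d -> Prop,
    relaxed_monomial_order lt /\ is_max_gap lt S F.

Definition pseudo_frobenius (d : nat) (S : vec d -> Prop) (P : vec d) : Prop :=
  is_gap S P /\ forall s, S s -> s <> vzero d -> S (vadd P s).

(* quasi-irreducible; "F - x ∈ S" (in N^d) is rendered as F = x + s with s ∈ S *)
Definition quasi_irreducible (d : nat) (S : vec d -> Prop) : Prop :=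
  forall x, is_gap S x ->
    frobenius_allowable S (vadd x x) \/
    exists F, frobenius_allowable S F /\ exists s, S s /\ F = vadd x s.

(* Main.v *)
Require Import Defs.
From mathcomp Require Import all_boot.
From Stdlib Require Import Classical Lia.
From mathcomp Require Import zify.

Set Implicit Arguments. Unset Strict Implicit. Unset Printing Implicit Defensive.

Definition wt (d : nat) (y : vec d) := \sum_(i < d) y i.

Lemma vaddA d (a b c : vec d) : vadd (vadd a b) c = vadd a (vadd b c).
Proof. by apply/ffunP=> i; rewrite !ffunE addnA. Qed.

Lemma vaddC d (a b : vec d) : vadd a b = vadd b a.
Proof. by apply/ffunP=> i; rewrite !ffunE addnC. Qed.

Lemma vadd0 d (a : vec d) : vadd a (vzero d) = a.
Proof. by apply/ffunP=> i; rewrite !ffunE addn0. Qed.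

Lemma wt_add d (a b : vec d) : wt (vadd a b) = wt a + wt b.
Proof. rewrite /wt -big_split /=; apply: eq_bigr => i _; by rewrite ffunE. Qed.

Lemma wt_pos d (s : vec d) : s <> vzero d -> 0 < wt s.
Proof.
move=> hs; rewrite lt0n; apply/negP => /eqP h; apply: hs.
apply/ffunP => i; rewrite ffunE.
have : s i <= wt s.
  by rewrite /wt (bigD1 i) //= leq_addr.
by rewrite h leqn0 => /eqP.
Qed.

Lemma exists_PF d (S : vec d -> Prop) (gaps : seq (vec d)) :
  is_GNS S -> (forall x, ~ S x -> x \in gaps) ->
  forall x, is_gap S x ->
  exists P, pseudo_frobenius S P /\ exists s, S s /\ P = vadd x s.
Proof.
move=> [S0 Sadd _] hg x hx.
set B := \max_(g <- gaps) wt g.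
have wB : forall y, is_gap S y -> wt y <= B.
  by move=> y hy; apply: (leq_bigmax_seq _ (hg y hy)).
suff: forall k y, is_gap S y -> (exists s, S s /\ y = vadd x s) -> B - wt y <= k ->
  exists P, pseudo_frobenius S P /\ exists s, S s /\ P = vadd x s.
  move=> H; apply: (H (B - wt x) x hx) => //.
  by exists (vzero d); split => //; rewrite vadd0.
elim=> [|k IH] y hy [s0 [Ss0 ey]] hk.
- exists y; split; last by exists s0.
  split => // s Ss sn0; apply: NNPP => hn.
  have := wB _ hn; rewrite wt_add.
  have := wt_pos sn0. have : wt y >= B by rewrite -subn_eq0 -leqn0.
  lia.
- case: (classic (pseudo_frobenius S y)) => hpf.
    by exists y; split => //; exists s0.
  have [s [Ss [sn0 hn]]] : exists s, S s /\ s <> vzero d /\ ~ S (vadd y s).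
    apply: NNPP => hne; apply: hpf; split => // s Ss sn0.
    apply: NNPP => hn; apply: hne; by exists s.
  apply: (IH (vadd y s)) => //.
    exists (vadd s0 s); split; first exact: Sadd.
    by rewrite ey vaddA.
  have := wB _ hn; rewrite wt_add.
  have := wt_pos sn0. move: hk. lia.
Qed.

Theorem proposition3p3 (d : nat) (S : vec d -> Prop) :
  is_GNS S ->
  (quasi_irreducible S <->
   forall P, pseudo_frobenius S P ->
     frobenius_allowable S P \/ frobenius_allowable S (vadd P P)).
Proof.
move=> hG; have [S0 Sadd [gaps hg]] := hG; split.
- move=> hq P [hP hPs]; case: (hq P hP) => [h|[F [hF [s [Ss eF]]]]]; first by right.
  left; case: (classic (s = vzero d)) => [es|sn0].
    by rewrite eF es vadd0 in hF.
  exfalso; move: hF => [lt [_ [hgF _]]]; apply: hgF; rewrite eF; exact: hPs.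
- move=> h x hx.
  have [P [hP [s [Ss eP]]]] := exists_PF hG hg hx.
  case: (h P hP) => hF.
    by right; exists P; split => //; exists s.
  case: (classic (s = vzero d)) => [es|sn0].
    by left; rewrite eP es vadd0 in hF.
  right; exists (vadd P P); split => //; exists (vadd P s); split.
    by apply: hP.2.
  by rewrite {1}eP vaddA (vaddC s P).
Qed.
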